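(* For every positive integer $l$ and every $n\ge 1$, the polynomial $\mathcal{A}_n^{(l)}(s,t)$ is symmetric in $s$ and $t$; equivalently, $\mathcal{A}^{(l)}(n,k)=\mathcal{A}^{(l)}(n,n-1-k)$ for $0\le k\le n-1$, i.e. the polynomial $\mathcal{A}_n^{(l)}(t)=\sum_{k=0}^{n-1}\mathcal{A}^{(l)}(n,k)t^k$ is palindromic.
   Context: A subexceedant function on $[n]$ is a map $f:[n]\to[n]$ with $1\le f(i)\le i$; its block leader set is $\mathrm{bl}(f)=\{i\in[n]: f(i)\notin f(\{1,\dots,i-1\})\}$. $\mathcal{A}^{(l)}(n,k)$ is the number of $l$-tuples $(f_1,\dots,f_l)$ of subexceedant functions on $[n]$ with $|\mathrm{bl}(f_1)|=k+1$ and $\mathrm{bl}(f_1)=\cdots=\mathrm{bl}(f_l)$. $\mathcal{A}_n^{(l)}(s,t)=\sum_{k=0}^{n-1}\mathcal{A}^{(l)}(n,k)s^kt^{n-1-k}$. *)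

(* Defs.v *)
From mathcomp Require Import all_boot.
Set Implicit Arguments. Unset Strict Implicit. Unset Printing Implicit Defensive.

(* Positions 1..n of the paper are encoded as 'I_n (position i+1 <-> i : 'I_n),
   values likewise; so f(i) <= i in the paper becomes  f i <= i  here. *)

Definition subexc (n : nat) (f : {ffun 'I_n -> 'I_n}) : bool :=
  [forall i : 'I_n, (f i <= i)%N].

Definition bl (n : nat) (f : {ffun 'I_n -> 'I_n}) : {set 'I_n} :=
  [set i : 'I_n | f i \notin f @: [set j : 'I_n | (j < i)%N]].

(* An l-tuple is an element of {ffun 'I_l -> {ffun 'I_n -> 'I_n}}; f_1 is F at index 0.
   (Meaningful for l >= 1.) *)
Definition Acount (l n k : nat) : nat :=
  #|[set F : {ffun 'I_l -> {ffun 'I_n -> 'I_n}} |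
      [forall i : 'I_l, subexc (F i)] &&
      [exists i0 : 'I_l, ((i0 : nat) == 0%N) &&
         (#|bl (F i0)| == k.+1) && [forall i : 'I_l, bl (F i) == bl (F i0)]]]|.

(* Main.v *)
Require Import Defs.
From mathcomp Require Import all_boot.
Set Implicit Arguments. Unset Strict Implicit. Unset Printing Implicit Defensive.

Definition lt_set N m := [set j : 'I_N | (j < m)%N].

Lemma card_lt_set N m : m <= N -> #|lt_set N m| = m.
Proof.
move=> hm.
have -> : lt_set N m = widen_ord hm @: [set: 'I_m].
  apply/setP => x; rewrite !inE; apply/idP/imsetP.
  - by move=> hx; exists (Ordinal hx); rewrite ?inE //; apply: val_inj.
  - by case=> y _ ->; rewrite /= ltn_ord.
rewrite card_imset ?cardsT ?card_ord //.
by move=> a b /(congr1 val) /= h; apply: val_inj.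
Qed.

Lemma lt_set_big N m : N <= m -> lt_set N m = setT.
Proof. by move=> h; apply/setP => x; rewrite !inE (leq_trans (ltn_ord x) h). Qed.

Lemma lt_setS N m (hm : m < N) : lt_set N m.+1 = (Ordinal hm) |: lt_set N m.
Proof. by apply/setP => x; rewrite !inE ltnS leq_eqVlt -val_eqE. Qed.

Lemma in_bl N (f : {ffun 'I_N -> 'I_N}) i : (i \in bl f) = (f i \notin f @: lt_set N i).
Proof. by rewrite /bl inE. Qed.

Lemma card_Uf N (f : {ffun 'I_N -> 'I_N}) m :
  #|f @: lt_set N m| = #|bl f :&: lt_set N m|.
Proof.
elim: m => [|m IH].
  have -> : lt_set N 0 = set0 by apply/setP => x; rewrite !inE.
  by rewrite imset0 setI0 !cards0.
case: (ltnP m N) => hm; last first.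
  by rewrite !lt_set_big // in IH *; apply: (leq_trans hm).
rewrite lt_setS imsetU1 cardsU1 IH.
have -> : bl f :&: (Ordinal hm |: lt_set N m) =
   if Ordinal hm \in bl f then Ordinal hm |: (bl f :&: lt_set N m) else bl f :&: lt_set N m.
  case h: (Ordinal hm \in bl f); apply/setP => x; rewrite in_setI in_setU1;
    case: (x =P Ordinal hm) => [->|/eqP ne] //=.
  - by rewrite h in_setU1 eqxx.
  - by rewrite in_setU1 (negbTE ne) in_setI.
  - by rewrite h in_setI h.
  - by rewrite in_setI.
rewrite in_bl; case: ifP => //= h.
by rewrite cardsU1 !inE /= ltnn andbF.
Qed.

Lemma bl_agree N (f g : {ffun 'I_N -> 'I_N}) (i : 'I_N) :
  (forall j : 'I_N, j <= i -> f j = g j) -> (i \in bl f) = (i \in bl g).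
Proof.
move=> H; rewrite !in_bl H //.
suff -> : f @: lt_set N i = g @: lt_set N i by [].
by apply: eq_in_imset => j; rewrite inE => hj; apply: H; apply: ltnW.
Qed.

Section Level.
Variable n : nat.
Local Notation N := n.+1.
Local Notation FF := {ffun 'I_N -> 'I_N}.

Definition Lset m (S : {set 'I_N}) := [set f : FF | [&& subexc f,
   [forall i : 'I_N, (m <= i) ==> (f i == ord0)] &
   [forall i : 'I_N, (i < m) ==> ((i \in bl f) == (i \in S))]]].

Definition aS (S : {set 'I_N}) (i : 'I_N) :=
  if i \in S then i.+1 - #|S :&: lt_set N i| else #|S :&: lt_set N i|.

Lemma L0 S : #|Lset 0 S| = 1.
Proof.
have -> : Lset 0 S = [set [ffun=> ord0]]; last by rewrite cards1.
apply/setP => f; rewrite !inE; apply/idP/eqP.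
- case/and3P => _ /forallP H _; apply/ffunP => i; rewrite ffunE.
  by move: (H i) => /= /eqP.
- move=> ->; apply/and3P; split.
  + by apply/forallP => i; rewrite ffunE.
  + by apply/forallP => i; rewrite ffunE.
  + by apply/forallP.
Qed.

Lemma Lall S : Lset N S = [set f : FF | subexc f && (bl f == S)].
Proof.
apply/setP => f; rewrite !inE; congr (_ && _).
apply/andP/eqP.
- case=> _ /forallP H; apply/setP => i; move: (H i); rewrite ltn_ord /=.
  by move/eqP.
- move=> ->; split; apply/forallP => i; last by rewrite eqxx implybT.
  by rewrite leqNgt ltn_ord.
Qed.

Lemma Lstep m (hm : m < N) S : #|Lset m.+1 S| = #|Lset m S| * aS S (Ordinal hm).
Proof.
set im : 'I_N := Ordinal hm.
pose reset (f : FF) : FF := [ffun i => if i == im then ord0 else f i].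
pose upd (g : FF) (v : 'I_N) : FF := [ffun i => if i == im then v else g i].
have updim g v : upd g v im = v by rewrite ffunE eqxx.
rewrite -[#|Lset m.+1 S|]sum1_card (partition_big reset (mem (Lset m S))) /=; last first.
  move=> f; rewrite !inE => /and3P [Hs /forallP H0 /forallP Hb].
  apply/and3P; split.
  - apply/forallP => i; rewrite ffunE; case: (i =P im) => _ //.
    exact: (forallP Hs i).
  - apply/forallP => i; apply/implyP => hi; rewrite ffunE.
    case: (i =P im) => [//|/eqP ne]; apply: (implyP (H0 i)).
    by rewrite ltn_neqAle hi andbT; rewrite -val_eqE eq_sym in ne.
  - apply/forallP => i; apply/implyP => hi.
    have ne : i != im by rewrite -val_eqE /= neq_ltn hi.
    rewrite (@bl_agree _ _ f); last first.
      move=> j hj; rewrite ffunE; have -> // : (j == im) = false.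
      by apply/negbTE; rewrite -val_eqE /= neq_ltn (leq_ltn_trans hj hi).
    by apply: (implyP (Hb i)); rewrite ltnW.
rewrite (eq_bigr (fun _ => aS S im)) ?sum_nat_const //.
move=> g; rewrite /Lset inE => /and3P [Hgs /forallP Hg0 /forallP Hgb].
rewrite sum1_card.
set U := g @: lt_set N m.
set V := [set v : 'I_N | (v < m.+1) && ((im \in S) == (v \notin U))].
have updU v : upd g v @: lt_set N m = U.
  apply: eq_in_imset => j; rewrite inE => hj; rewrite ffunE.
  by have -> : (j == im) = false by apply/negbTE; rewrite -val_eqE /= neq_ltn hj.
transitivity #|upd g @: V|.
  apply: eq_card => f; rewrite unfold_in /= inE; apply/andP/imsetP.
  - case=> /and3P [Hs /forallP H0 /forallP Hb] /eqP Hr.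
    have Hfg j : j != im -> f j = g j.
      by move=> ne; rewrite -Hr ffunE (negbTE ne).
    have fU : f @: lt_set N m = U.
      apply: eq_in_imset => j; rewrite inE => hj; apply: Hfg.
      by rewrite -val_eqE /= neq_ltn hj.
    exists (f im).
    + rewrite inE ltnS (forallP Hs im) /=.
      by move: (implyP (Hb im) (ltnSn m)); rewrite in_bl fU eq_sym.
    + apply/ffunP => i; rewrite ffunE; case: eqP => [->//|/eqP ne].
      exact: Hfg.
  - case=> v; rewrite inE => /andP [hv hvS] ->.
    split; last first.
      apply/eqP/ffunP => i; rewrite !ffunE; case: eqP => [->|//].
      by apply/esym/eqP; apply: (implyP (Hg0 im)).
    apply/and3P; split.
    + apply/forallP => i; rewrite ffunE; case: eqP => [->|_] //.
      exact: (forallP Hgs i).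
    + apply/forallP => i; apply/implyP => hi; rewrite ffunE.
      have -> : (i == im) = false.
        by apply/negbTE; rewrite -val_eqE /= neq_ltn hi orbT.
      by apply: (implyP (Hg0 i)); rewrite ltnW.
    + apply/forallP => i; apply/implyP => hi.
      case: (i =P im) => [->|/eqP ne].
        by rewrite in_bl updim updU eq_sym.
      have hi' : i < m by rewrite ltn_neqAle -ltnS hi andbT; rewrite -val_eqE in ne.
      rewrite (@bl_agree _ _ g); first by apply: (implyP (Hgb i)).
      move=> j hj; rewrite ffunE; have -> // : (j == im) = false.
      by apply/negbTE; rewrite -val_eqE /= neq_ltn (leq_ltn_trans hj hi').
rewrite card_imset; last first.
  by move=> v1 v2 h; rewrite -(updim g v1) -(updim g v2) h.
have hU : U \subset lt_set N m.+1.
  apply/subsetP => x /imsetP [j]; rewrite !inE => hj ->.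
  by rewrite ltnS (leq_trans (forallP Hgs j)) // ltnW.
have cU : #|U| = #|S :&: lt_set N m|.
  rewrite card_Uf; suff -> : bl g :&: lt_set N m = S :&: lt_set N m by [].
  apply/setP => i; rewrite !in_setI.
  case hi: (i \in lt_set N m); rewrite ?andbF ?andbT //.
  by apply/eqP; apply: (implyP (Hgb i)); move: hi; rewrite inE.
rewrite /aS; case hS: (im \in S).
  have -> : V = lt_set N m.+1 :\: U.
    by apply/setP => v; rewrite !inE hS; case: (v \in U); rewrite ?andbT ?andbF.
  by rewrite cardsD (setIidPr hU) card_lt_set // cU.
have -> : V = U; last by rewrite cU.
apply/setP => v; rewrite !inE hS; case hv: (v \in U) => /=; rewrite ?andbF //.
by move/subsetP: hU => /(_ v hv); rewrite inE => ->.
Qed.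

Lemma Lcount m S : m <= N -> #|Lset m S| = \prod_(i : 'I_N | i < m) aS S i.
Proof.
elim: m => [_|m IH hm].
  rewrite L0 big_pred0; first reflexivity.
  by move=> i.
rewrite (Lstep hm) (IH (ltnW hm)) [in RHS](bigD1 (Ordinal hm)); last exact: ltnSn.
rewrite mulnC; congr (_ * _); apply: eq_bigl => i.
by rewrite ltnS ltn_neqAle andbC -val_eqE.
Qed.

Lemma Tcount S : #|[set f : FF | subexc f && (bl f == S)]| = \prod_(i : 'I_N) aS S i.
Proof.
rewrite -Lall (Lcount S (leqnn N)); apply: eq_bigl => i; exact: ltn_ord.
Qed.
End Level.

From mathcomp Require Import zify.

Definition flip N (z : 'I_N) (S : {set 'I_N}) := [set i | (i == z) == (i \in S)].

Lemma flipK N (z : 'I_N) : involutive (flip z).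
Proof.
move=> S; apply/setP => i; rewrite /flip !inE.
case: (i \in S); case: (i == z); reflexivity.
Qed.

Lemma card_flip n (S : {set 'I_n.+1}) : ord0 \in S -> #|flip ord0 S| + #|S| = n.+2.
Proof.
move=> h0; rewrite -cardsUI.
have -> : flip ord0 S :|: S = setT.
  apply/setP => i; rewrite /flip !inE; case: (i =P ord0) => [->|_]; first by rewrite h0.
  case: (i \in S); reflexivity.
have -> : flip ord0 S :&: S = [set ord0].
  apply/setP => i; rewrite /flip !inE; case: (i =P ord0) => [->|_]; first by rewrite h0.
  case: (i \in S); reflexivity.
by rewrite cardsT card_ord cards1 addn1.
Qed.

Lemma aS_flip n (S : {set 'I_n.+1}) i : ord0 \in S -> aS (flip ord0 S) i = aS S i.
Proof.
move=> h0; rewrite /aS.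
case: (i =P ord0) => [->|/eqP ne].
  have -> : lt_set n.+1 (@ord0 n) = set0 by apply/setP => x; rewrite !inE.
  by rewrite !setI0 inE eqxx h0.
have ipos : 0 < i by rewrite lt0n; rewrite -val_eqE in ne.
have hc : #|S :&: lt_set n.+1 i| + #|flip ord0 S :&: lt_set n.+1 i| = i.+1.
  rewrite -cardsUI.
  have -> : (S :&: lt_set n.+1 i) :|: (flip ord0 S :&: lt_set n.+1 i) = lt_set n.+1 i.
    apply/setP => x; rewrite /flip !inE; case: (x =P ord0) => [->|_].
      by rewrite h0 /= ipos.
    by case: (x \in S); case: (x < i).
  have -> : (S :&: lt_set n.+1 i) :&: (flip ord0 S :&: lt_set n.+1 i) = [set ord0].
    apply/setP => x; rewrite /flip !inE; case: (x =P ord0) => [->|_].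
      by rewrite h0 /= ipos.
    by case: (x \in S); rewrite ?andbF.
  by rewrite card_lt_set ?cards1 ?addn1 // ltnW.
have -> : (i \in flip ord0 S) = ~~ (i \in S) by rewrite /flip inE (negbTE ne); case: (i \in S).
by case: (i \in S) => /=; rewrite -hc ?addKn ?addnK.
Qed.

Lemma Acount_sum l n k : 0 < l -> Acount l n.+1 k =
  \sum_(S : {set 'I_n.+1} | #|S| == k.+1) (\prod_(i : 'I_n.+1) aS S i) ^ l.
Proof.
case: l => // l _.
rewrite /Acount -sum1_card.
rewrite (partition_big (fun F : {ffun 'I_l.+1 -> {ffun 'I_n.+1 -> 'I_n.+1}} => bl (F ord0))
           (fun S : {set 'I_n.+1} => #|S| == k.+1)) /=; last first.
  move=> F; rewrite inE => /andP [_ /existsP [i0 /andP [/andP [/eqP h0 hc] _]]].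
  by have <- : i0 = ord0 by apply: val_inj.
apply: eq_bigr => S /eqP hS.
rewrite sum1_card -Tcount.
set T := [set f : {ffun 'I_n.+1 -> 'I_n.+1} | subexc f && (bl f == S)].
transitivity #|@ffun_on_mem 'I_l.+1 _ (mem T)|; last by rewrite card_ffun_on card_ord.
apply: eq_card => F; rewrite unfold_in /= inE.
apply/andP/ffun_onP.
- case=> /andP [/forallP Hs /existsP [i0 /andP [/andP [/eqP h0 hc] /forallP Hb]]] /eqP e.
  have e0 : i0 = ord0 by apply: val_inj.
  move=> i; rewrite inE Hs /=; move: (Hb i); rewrite e0 e; exact: id.
- move=> H; have H' i : subexc (F i) && (bl (F i) == S) by move: (H i); rewrite inE.
  split; last by case/andP: (H' ord0).
  apply/andP; split; first by apply/forallP => i; case/andP: (H' i).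
  apply/existsP; exists ord0; rewrite eqxx /=.
  case/andP: (H' ord0) => _ /eqP ->; rewrite hS eqxx /=.
  by apply/forallP => i; case/andP: (H' i) => _ ->.
Qed.

Lemma sum_restrict n j L :
  \sum_(S : {set 'I_n.+1} | #|S| == j) (\prod_(i : 'I_n.+1) aS S i) ^ L.+1 =
  \sum_(S : {set 'I_n.+1} | (#|S| == j) && (ord0 \in S)) (\prod_(i : 'I_n.+1) aS S i) ^ L.+1.
Proof.
rewrite (bigID (fun S : {set 'I_n.+1} => ord0 \in S)) /= [X in _ + X]big1 ?addn0; first reflexivity.
move=> S /andP [_ h0].
rewrite (bigD1 ord0); last reflexivity.
have -> : aS S ord0 = 0.
  rewrite /aS (negbTE h0).
  have -> : lt_set n.+1 (@ord0 n) = set0 by apply/setP => x; rewrite !inE.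
  by rewrite setI0 cards0.
by rewrite /= mul0n exp0n.
Qed.

Theorem mainTheorem14 :
  forall (l n k : nat), (0 < l)%N -> (1 <= n)%N -> (k <= n - 1)%N ->
    Acount l n k = Acount l n (n - 1 - k).
Proof.
move=> l [|n] k hl hn hk; first by [].
have -> : n.+1 - 1 - k = n - k by rewrite subn1.
rewrite subn1 /= in hk.
rewrite !Acount_sum //.
case: l hl => [//|L] _.
rewrite sum_restrict (sum_restrict n (n - k).+1).
rewrite [RHS](reindex_inj (inv_inj (@flipK _ ord0))).
apply: eq_big => S.
  have f0 : (ord0 \in flip ord0 S) = (ord0 \in S).
    by rewrite /flip inE eqxx; case: (ord0 \in S).
  rewrite f0; case h0: (ord0 \in S); rewrite ?andbF ?andbT; first last.
    reflexivity.
  have c1 := card_flip h0.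
  have c2 : #|S| <= n.+1 by have := subset_leq_card (subsetT S); rewrite cardsT card_ord.
  apply/eqP/eqP; move: c1 c2; move: #|S| #|flip ord0 S| => a b c1 c2; lia.
move=> /andP [_ h0]; congr (_ ^ _); apply: eq_bigr => i _.
by rewrite aS_flip.
Qed.
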